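(* Let $\mathbb{F}$ be a field, $0\neq h\in\mathbb{F}[x]$, $A_1$ the Weyl algebra and $A=A_h\subseteq A_1$ the unital subalgebra generated by $x$ and $\hat y=yh$. For $\alpha\in A_1$ let $F_\alpha:\mathbb{F}[x]\to A_1$ be the linear map with $F_\alpha(x^s)=\sum_{\ell=0}^{s-1}x^\ell\alpha x^{s-\ell-1}$ for $s\geq0$ (so $F_\alpha(1)=0$). Then for all $f,g\in\mathbb{F}[x]$: (a) $F_\alpha(fg)=fF_\alpha(g)+F_\alpha(f)g$; (b) if $\alpha$ commutes with $x$, then $F_\alpha(f)=\alpha f'$; (c) if $\alpha\in A$, then $F_\alpha(f)\in f'\alpha+[x,A]$.
   Context: $A_1$ is generated by $x,y$ with $yx-xy=1$. $[x,A]=\{xa-ax:a\in A\}$. $f'$ is the derivative of $f$. *)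

(* Defs.v *)
From HB Require Import structures.
From mathcomp Require Import all_boot all_order all_algebra.
Set Implicit Arguments. Unset Strict Implicit. Unset Printing Implicit Defensive.
Import GRing.Theory.
Local Open Scope ring_scope.

(* The first Weyl algebra over a field F is characterized (up to isomorphism)
   as an F-algebra R with elements x, y such that y x - x y = 1 and the
   monomials x^i y^j (i, j >= 0) form an F-basis of R (PBW basis). *)
Definition is_weyl (F : fieldType) (R : algType F) (x y : R) : Prop :=
  [/\ y * x - x * y = 1,
      (forall a : R, exists n (c : 'I_n -> 'I_n -> F),
          a = \sum_(i < n) \sum_(j < n) c i j *: (x ^+ i * y ^+ j)) &
      (forall n (c : 'I_n -> 'I_n -> F),
          \sum_(i < n) \sum_(j < n) c i j *: (x ^+ i * y ^+ j) = 0 ->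
          forall i j, c i j = 0)].

(* evaluation of f in F[x] at the element x of R (embedding F[x] into A_1) *)
Definition ev (F : fieldType) (R : algType F) (x : R) (f : {poly F}) : R :=
  horner_alg x f.

Inductive in_Ah (F : fieldType) (R : algType F) (x y : R) (h : {poly F}) : R -> Prop :=
  | Ah_one : in_Ah x y h 1
  | Ah_x : in_Ah x y h x
  | Ah_yhat : in_Ah x y h (y * ev x h)
  | Ah_add a b : in_Ah x y h a -> in_Ah x y h b -> in_Ah x y h (a + b)
  | Ah_scale (c : F) a : in_Ah x y h a -> in_Ah x y h (c *: a)
  | Ah_mul a b : in_Ah x y h a -> in_Ah x y h b -> in_Ah x y h (a * b).

Definition Fmap (F : fieldType) (R : algType F) (x alpha : R) (f : {poly F}) : R :=
  \sum_(s < size f) f`_s *: \sum_(l < s) x ^+ l * alpha * x ^+ (s - l - 1).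

(* Main.v *)
Require Import Defs.
From HB Require Import structures.
From mathcomp Require Import all_boot all_order all_algebra.
Import GRing.Theory.
Local Open Scope ring_scope.

Section S.
Variables (F : fieldType) (R : algType F) (x y : R).

Definition G (alpha : R) (s : nat) : R := \sum_(l < s) x ^+ l * alpha * x ^+ (s - l - 1).

Lemma FmapE alpha {n} {f : {poly F}} : (size f <= n)%N -> Fmap x alpha f = \sum_(s < n) f`_s *: G alpha s.
Proof.
move=> le; rewrite /Fmap (big_ord_widen n (fun s => f`_s *: G alpha s)) // big_mkcond.
by apply: eq_bigr => i _; case: ltnP => // le_p_i; rewrite nth_default ?scale0r.
Qed.

Lemma evE {n} {f : {poly F}} : (size f <= n)%N -> ev x f = \sum_(s < n) f`_s *: x ^+ s.
Proof.
move=> le; rewrite /ev /horner_alg /horner_morph (@horner_coef_wide _ n).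
  by apply: eq_bigr => i _; rewrite coef_map /= mulr_algl.
by rewrite (leq_trans (size_poly _ _)) // (leq_trans _ le) // size_map_poly_le.
Qed.

Lemma GS alpha i : G alpha i.+1 = alpha * x ^+ i + x * G alpha i.
Proof.
rewrite /G big_ord_recl expr0 mul1r subn0 subn1 /=; congr (_ + _).
rewrite mulr_sumr; apply: eq_bigr => l _.
by rewrite /bump /= add1n subSS exprS !mulrA.
Qed.

Lemma Fmap_add alpha (p q : {poly F}) : Fmap x alpha (p + q) = Fmap x alpha p + Fmap x alpha q.
Proof.
set n := maxn (size p) (size q).
have hp : (size p <= n)%N by rewrite leq_maxl.
have hq : (size q <= n)%N by rewrite leq_maxr.
have hpq : (size (p + q)%R <= n)%N by rewrite (leq_trans (size_polyD _ _)).
rewrite (FmapE alpha hpq) (FmapE alpha hp) (FmapE alpha hq).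
by rewrite -big_split; apply: eq_bigr => i _; rewrite coefD scalerDl.
Qed.

Lemma FmapC alpha (c : F) : Fmap x alpha c%:P = 0.
Proof.
have h1 : (size c%:P <= 1)%N by rewrite size_polyC leq_b1.
rewrite (FmapE alpha h1).
by rewrite big_ord1 /G big_ord0 scaler0.
Qed.

Lemma FmapXM alpha (p : {poly F}) : Fmap x alpha ('X * p) = x * Fmap x alpha p + alpha * ev x p.
Proof.
have h1 : (size ('X * p)%R <= (size p).+1)%N.
  by rewrite (leq_trans (size_polyMleq _ _)) // size_polyX.
rewrite (FmapE alpha h1).
rewrite big_ord_recl coefXM eqxx scale0r add0r.
rewrite (FmapE alpha (leqnn (size p))) (evE (leqnn (size p))).
rewrite mulr_sumr mulr_sumr -big_split; apply: eq_bigr => i _.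
by rewrite coefXM /= GS scalerDr addrC -!scalerAr.
Qed.
Lemma Fmap_scale alpha (c : F) (p : {poly F}) : Fmap x alpha (c *: p) = c *: Fmap x alpha p.
Proof.
have hs : (size (c *: p) <= size p)%N by apply: size_scale_leq.
rewrite (FmapE alpha hs) (FmapE alpha (leqnn (size p))) scaler_sumr.
by apply: eq_bigr => i _; rewrite coefZ scalerA.
Qed.

Lemma ev_step (p : {poly F}) c : ev x ('X * p + c%:P) = x * ev x p + c%:A.
Proof. by rewrite /ev rmorphD rmorphM /= horner_algX horner_algC. Qed.

Lemma ev0 : ev x 0 = 0.
Proof. by rewrite /ev rmorph0. Qed.

Lemma ev_in h p : in_Ah x y h (ev x p).
Proof.
elim/poly_ind: p => [|p c IH]; first by rewrite ev0 -(scale0r (1:R)); do 2 constructor.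
rewrite mulrC ev_step; constructor; first by constructor => //; constructor.
by constructor; constructor.
Qed.

Lemma partA alpha (f g : {poly F}) :
  Fmap x alpha (f * g) = ev x f * Fmap x alpha g + Fmap x alpha f * ev x g.
Proof.
elim/poly_ind: f g => [|p c IH] g.
  by rewrite mul0r -polyC0 FmapC ev0 !mul0r addr0.
have evM (a b : {poly F}) : ev x (a * b) = ev x a * ev x b by rewrite /ev rmorphM.
rewrite (mulrC p 'X) mulrDl -mulrA mul_polyC Fmap_add FmapXM Fmap_scale IH ev_step.
rewrite Fmap_add FmapXM FmapC addr0 evM.
rewrite !mulrDr !mulrDl !mulrA mulr_algl.
by rewrite -!addrA; congr (_ + _); rewrite [RHS]addrC addrA.
Qed.

Lemma evD (a b : {poly F}) : ev x (a + b) = ev x a + ev x b.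
Proof. by rewrite /ev rmorphD. Qed.
Lemma evXM (a : {poly F}) : ev x ('X * a) = x * ev x a.
Proof. by rewrite /ev rmorphM /= horner_algX. Qed.

Lemma partB alpha (f : {poly F}) : alpha * x = x * alpha -> Fmap x alpha f = alpha * ev x f^`().
Proof.
move=> comm; elim/poly_ind: f => [|p c IH]; first by rewrite deriv0 -polyC0 FmapC polyC0 ev0 mulr0.
rewrite derivMXaddC Fmap_add FmapC addr0 mulrC FmapXM IH mulrA -comm.
by rewrite (mulrC _ 'X) evD evXM mulrDr addrC mulrA.
Qed.

Definition cm (u v : R) := u * v - v * u.
Lemma cmDr u v w : cm u (v + w) = cm u v + cm u w.
Proof. by rewrite /cm mulrDr mulrDl opprD addrACA. Qed.
Lemma cmNr u v : cm u (- v) = - cm u v.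
Proof. by rewrite /cm mulrN mulNr opprK opprB addrC. Qed.
Lemma cmMr u v w : cm u (v * w) = cm u v * w + v * cm u w.
Proof. by rewrite /cm mulrBl mulrBr !mulrA addrA subrK. Qed.
Lemma cmxx u : cm u u = 0.
Proof. by rewrite /cm subrr. Qed.
Lemma cmC u v : cm u v = - cm v u.
Proof. by rewrite /cm opprB. Qed.
Lemma cmA u (c : F) : cm u c%:A = 0.
Proof. by rewrite /cm mulr_algl mulr_algr subrr. Qed.
Lemma ev_comm p : cm x (ev x p) = 0.
Proof.
have evM (a b : {poly F}) : ev x (a * b) = ev x a * ev x b by rewrite /ev rmorphM.
rewrite /cm; have -> : ev x p * x = ev x (p * 'X) by rewrite evM /ev horner_algX.
by rewrite -evXM mulrC subrr.
Qed.

Lemma comm_ev h alpha p : in_Ah x y h alpha ->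
  exists2 b, in_Ah x y h b & cm alpha (ev x p) = cm x b.
Proof.
move=> hA; elim/poly_ind: p => [|p c [b hb IH]].
  exists 0; first by rewrite -(scale0r (1:R)); do 2 constructor.
  by rewrite ev0 /cm !mul0r !mulr0.
exists (x * b + - (alpha * ev x p)).
  apply: Ah_add; first by apply: Ah_mul => //; apply: Ah_x.
  by rewrite -scaleN1r; apply: Ah_scale; apply: Ah_mul => //; apply: ev_in.
rewrite mulrC ev_step cmDr cmA addr0 cmMr IH cmDr cmNr cmMr cmxx mul0r add0r.
rewrite cmMr ev_comm mulr0 addr0 (cmC alpha x) mulNr addrC.
done.
Qed.

Lemma partC h alpha (f : {poly F}) : in_Ah x y h alpha ->
  exists2 a, in_Ah x y h a & Fmap x alpha f = ev x f^`() * alpha + (x * a - a * x).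
Proof.
move=> hA; elim/poly_ind: f => [|p c [a ha E]].
  exists 0; first by rewrite -(scale0r (1:R)); do 2 constructor.
  by rewrite deriv0 -polyC0 FmapC polyC0 ev0 !mul0r !mulr0 subrr addr0.
have [b hb Eb] := comm_ev h alpha p hA.
exists (x * a + b).
  by apply: Ah_add => //; apply: Ah_mul => //; apply: Ah_x.
rewrite derivMXaddC Fmap_add FmapC addr0 (mulrC p) FmapXM E (mulrC _ 'X) evD evXM.
rewrite -/(cm x a) -/(cm x (x * a + b)) cmDr cmMr cmxx mul0r add0r -Eb.
have -> : alpha * ev x p = ev x p * alpha + cm alpha (ev x p) by rewrite /cm addrC subrK.
rewrite mulrDr mulrDl !mulrA.
by rewrite addrACA [_ + ev x p * alpha]addrC.
Qed.
End S.

Theorem lemma3p2 (F : fieldType) (R : algType F) (x y : R)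
  (hW : is_weyl x y) (h : {poly F}) (hnz : h != 0) (alpha : R) :
  forall f g : {poly F},
  [/\ Fmap x alpha (f * g) = ev x f * Fmap x alpha g + Fmap x alpha f * ev x g,
      (alpha * x = x * alpha -> Fmap x alpha f = alpha * ev x f^`()) &
      (in_Ah x y h alpha ->
         exists2 a, in_Ah x y h a & Fmap x alpha f = ev x f^`() * alpha + (x * a - a * x))].
Proof.
move=> f g; split; first exact: partA.
  exact: partB.
exact: partC.
Qed.
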